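(* Let $T_0\subset\overline{\mathbb R}^X$ be an extended vector lattice, $T_0^+=\{x\in T_0:x\ge0\}$, and let $S:T_0\to\mathbb R$ be an $S$-integral. For $x\in T_0^+$ put $P(x):=\sup\{S(\varphi):\varphi\in T_0,\ 0\le\varphi\le x\}$ (a real number), and for $x\in T_0$ put $S^+(x):=P(x\vee0)-P((-x)\vee0)$, $S^-(x):=S^+(x)-S(x)$ and $|S|(x):=S^+(x)+S^-(x)$. Then $P(x_1+x_2)=P(x_1)+P(x_2)$ for $x_1,x_2\in T_0^+$, $S^+(x)=P(\varphi)-P(\psi)$ whenever $x=\varphi-\psi$ with $\varphi,\psi\in T_0^+$, and each of $S^+$, $S^-$ and $|S|$ is an $I$-integral on $T_0$; in particular $S=S^+-S^-$ is a difference of two $I$-integrals.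
   Context: Let $X$ be a nonempty set, $\overline{\mathbb R}=\mathbb R\cup\{-\infty,\infty\}$, $\overline{\mathbb R}^X$ the functions $X\to\overline{\mathbb R}$ with pointwise order, $\wedge$, $\vee$, $|\cdot|$. Addition convention: $(x+y)(t)=x(t)+y(t)$ when defined and $0$ where $\{x(t),y(t)\}=\{\infty,-\infty\}$; $x-y:=x+(-y)$; scalar multiples pointwise with $0\cdot(\pm\infty)=0$. An extended vector lattice is a set $T_0\subset\overline{\mathbb R}^X$ closed under real linear combinations, $\wedge$, $\vee$, and such that for $x,y\in T_0$ and any $c\in\overline{\mathbb R}$ the function equal to $x(t)+y(t)$ where defined and $c$ where $\{x(t),y(t)\}=\{\infty,-\infty\}$ is in $T_0$. $(x_n)\searrow0$ means pointwise nonincreasing with pointwise limit $0$. An $I$-integral on $T_0$ is a linear map $I:T_0\to\mathbb R$ with $I(x)\ge0$ for $x\ge0$ and $I(x_n)\to0$ whenever $(x_n)\subset T_0$, $(x_n)\searrow0$. An $S$-integral on $T_0$ is a map $S:T_0\to\mathbb R$ such that (S1) $S$ is linear; (S2) $(x_n)\subset T_0$, $(x_n)\searrow0$ implies $S(x_n)\to0$; (S3) there is a function $M:T_0^+\to\mathbb R$ with $M(\varphi)\le M(\psi)$ whenever $\varphi,\psi\in T_0^+$, $\varphi\le\psi$, and $|S(x)|\le M(|x|)$ for all $x\in T_0$. *)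

(* Defs.v *)
From HB Require Import structures.
From mathcomp Require Import all_boot all_order all_algebra.
From mathcomp Require Import all_classical all_reals all_analysis.
Set Implicit Arguments. Unset Strict Implicit. Unset Printing Implicit Defensive.
Import Order.TTheory GRing.Theory Num.Theory numFieldNormedType.Exports.
Local Open Scope classical_set_scope.
Local Open Scope ring_scope.

Section Ext.
Variables (R : realType) (X : Type).
Local Open Scope ereal_scope.

(* the paper's addition convention on extended reals: oo + (-oo) := 0 *)
Definition ev_xadd (a b : \bar R) : \bar R :=
  match a, b with
  | +oo, -oo => 0
  | -oo, +oo => 0
  | _, _ => a + b
  end.

Definition ev_fadd (x y : X -> \bar R) : X -> \bar R := fun t => ev_xadd (x t) (y t).
Definition ev_fopp (x : X -> \bar R) : X -> \bar R := fun t => - x t.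
Definition ev_fsub (x y : X -> \bar R) : X -> \bar R := ev_fadd x (ev_fopp y).
(* scalar multiple, with 0 * (+-oo) = 0 (mathcomp's convention for mule) *)
Definition ev_fscale (c : R) (x : X -> \bar R) : X -> \bar R := fun t => c%:E * x t.
Definition ev_fmin (x y : X -> \bar R) : X -> \bar R := fun t => Order.min (x t) (y t).
Definition ev_fmax (x y : X -> \bar R) : X -> \bar R := fun t => Order.max (x t) (y t).
Definition ev_fabs (x : X -> \bar R) : X -> \bar R := fun t => `| x t |.
Definition ev_fzero : X -> \bar R := fun _ => 0.
Definition ev_fle (x y : X -> \bar R) : Prop := forall t, x t <= y t.

Definition ev_fadd_patch (x y : X -> \bar R) (c : \bar R) : X -> \bar R :=
  fun t => match x t, y t with
           | +oo, -oo => c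
           | -oo, +oo => c
           | a, b => a + b
           end.

Definition ext_vector_lattice (T0 : set (X -> \bar R)) : Prop :=
  [/\ (forall x y (a b : R), T0 x -> T0 y -> T0 (ev_fadd (ev_fscale a x) (ev_fscale b y))),
      (forall x y, T0 x -> T0 y -> T0 (ev_fmin x y)),
      (forall x y, T0 x -> T0 y -> T0 (ev_fmax x y)) &
      (forall x y c, T0 x -> T0 y -> T0 (ev_fadd_patch x y c))].

Definition ev_pos_part (T0 : set (X -> \bar R)) : set (X -> \bar R) :=
  [set x | T0 x /\ ev_fle ev_fzero x].

Definition ev_decr_to0 (xs : nat -> X -> \bar R) : Prop :=
  (forall n t, xs n.+1 t <= xs n t) /\
  (forall t, (fun n => xs n t) @ \oo --> (0 : \bar R)).

Definition ev_is_linear (T0 : set (X -> \bar R)) (S : (X -> \bar R) -> R) : Prop :=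
  forall x y (a b : R), T0 x -> T0 y ->
    S (ev_fadd (ev_fscale a x) (ev_fscale b y)) = (a * S x + b * S y)%R.

Definition ev_seq_continuous (T0 : set (X -> \bar R)) (S : (X -> \bar R) -> R) : Prop :=
  forall xs : nat -> X -> \bar R, (forall n, T0 (xs n)) -> ev_decr_to0 xs ->
    (fun n => S (xs n)) @ \oo --> (0%R : R).

Definition I_integral (T0 : set (X -> \bar R)) (I : (X -> \bar R) -> R) : Prop :=
  [/\ ev_is_linear T0 I,
      (forall x, T0 x -> ev_fle ev_fzero x -> (0 <= I x)%R) &
      ev_seq_continuous T0 I].

Definition S_integral (T0 : set (X -> \bar R)) (S : (X -> \bar R) -> R) : Prop :=
  [/\ ev_is_linear T0 S,
      ev_seq_continuous T0 S &
      exists M : (X -> \bar R) -> R,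
        (forall phi psi, ev_pos_part T0 phi -> ev_pos_part T0 psi -> ev_fle phi psi ->
            (M phi <= M psi)%R) /\
        (forall x, T0 x -> (`| S x | <= M (ev_fabs x))%R)].

Definition ev_Pset (T0 : set (X -> \bar R)) (S : (X -> \bar R) -> R) (x : X -> \bar R)
  : set R := [set S phi | phi in [set phi | T0 phi /\ ev_fle ev_fzero phi /\ ev_fle phi x]].

Definition ev_Pfun T0 S x : R := sup (ev_Pset T0 S x).

Definition ev_Splus T0 S (x : X -> \bar R) : R :=
  (ev_Pfun T0 S (ev_fmax x ev_fzero) - ev_Pfun T0 S (ev_fmax (ev_fopp x) ev_fzero))%R.
Definition ev_Sminus T0 S (x : X -> \bar R) : R := (ev_Splus T0 S x - S x)%R.
Definition ev_Sabs T0 S (x : X -> \bar R) : R := (ev_Splus T0 S x + ev_Sminus T0 S x)%R.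

End Ext.

(* Main.v *)
Require Import Defs.
From HB Require Import structures.
From mathcomp Require Import all_boot all_order all_algebra.
From mathcomp Require Import all_classical all_reals all_analysis.
From mathcomp Require Import ring lra.
Import Order.TTheory GRing.Theory Num.Theory numFieldNormedType.Exports.
Local Open Scope classical_set_scope.
Local Open Scope ring_scope.

Section PW.
Variable R : realType.
Local Open Scope ereal_scope.
Notation xadd := (@ev_xadd R).
Lemma zeroF : (0 : \bar R) = (0%R)%:E. Proof. by []. Qed.
Lemma FN (r : R) : - r%:E = (- r)%:E. Proof. by []. Qed.
Lemma FD (r s : R) : r%:E + s%:E = (r + s)%:E. Proof. by []. Qed.
Lemma FM (r s : R) : r%:E * s%:E = (r * s)%:E. Proof. by []. Qed.
Lemma Fmax (r s : R) : Order.max r%:E s%:E = (Num.max r s)%:E. Proof. by rewrite EFin_max. Qed.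
Lemma Fmin (r s : R) : Order.min r%:E s%:E = (Num.min r s)%:E. Proof. by rewrite EFin_min. Qed.
Lemma oppy : - +oo = -oo :> \bar R. Proof. by []. Qed.
Lemma oppNy : - -oo = +oo :> \bar R. Proof. by []. Qed.
Lemma xFF (r s : R) : xadd r%:E s%:E = (r + s)%:E. Proof. by []. Qed.
Lemma xFy (r : R) : xadd r%:E +oo = +oo. Proof. by []. Qed.
Lemma xFNy (r : R) : xadd r%:E -oo = -oo. Proof. by []. Qed.
Lemma xyF (r : R) : xadd +oo r%:E = +oo. Proof. by []. Qed.
Lemma xNyF (r : R) : xadd -oo r%:E = -oo. Proof. by []. Qed.
Lemma xyy : xadd +oo +oo = +oo. Proof. by []. Qed.
Lemma xNyNy : xadd -oo -oo = -oo. Proof. by []. Qed.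
Lemma xyNy : xadd +oo -oo = 0%:E. Proof. by []. Qed.
Lemma xNyy : xadd -oo +oo = 0%:E. Proof. by []. Qed.
Lemma addyF (r : R) : +oo + r%:E = +oo. Proof. by []. Qed.
Lemma addFy (r : R) : r%:E + +oo = +oo. Proof. by []. Qed.
Lemma addyy : +oo + +oo = +oo :> \bar R. Proof. by []. Qed.
Lemma addNyNy : -oo + -oo = -oo :> \bar R. Proof. by []. Qed.
Lemma addFNy (r : R) : r%:E + -oo = -oo. Proof. by []. Qed.
Lemma addNyF (r : R) : -oo + r%:E = -oo. Proof. by []. Qed.
Lemma maxyF (r : R) : Order.max +oo r%:E = +oo. Proof. by []. Qed.
Lemma maxFy (r : R) : Order.max r%:E +oo = +oo. Proof. by rewrite maxey. Qed.
Lemma maxNyF (r : R) : Order.max -oo r%:E = r%:E. Proof. by rewrite maxNye. Qed.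
Lemma maxFNy (r : R) : Order.max r%:E -oo = r%:E. Proof. by rewrite maxeNy. Qed.
Lemma minyF (r : R) : Order.min +oo r%:E = r%:E. Proof. by rewrite minye. Qed.
Lemma minFy (r : R) : Order.min r%:E +oo = r%:E. Proof. by rewrite miney. Qed.
Lemma minNyF (r : R) : Order.min -oo r%:E = -oo. Proof. by rewrite minNye. Qed.
Lemma minFNy (r : R) : Order.min r%:E -oo = -oo. Proof. by rewrite mineNy. Qed.
Lemma minyy : Order.min +oo +oo = +oo :> \bar R. Proof. by []. Qed.
Lemma maxyy : Order.max +oo +oo = +oo :> \bar R. Proof. by []. Qed.
Lemma minNyNy : Order.min -oo -oo = -oo :> \bar R. Proof. by []. Qed.
Lemma maxNyNy : Order.max -oo -oo = -oo :> \bar R. Proof. by []. Qed.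
Lemma leyF (r : R) : (+oo <= r%:E) = false. Proof. by []. Qed.
Lemma leFNy (r : R) : (r%:E <= -oo) = false. Proof. by []. Qed.
Lemma leyNy : (+oo <= -oo :> \bar R) = false. Proof. by []. Qed.
Lemma leyy : (+oo <= +oo :> \bar R). Proof. by []. Qed.
Lemma leNyNy : (-oo <= -oo :> \bar R). Proof. by []. Qed.

Ltac mm := repeat match goal with
  | |- context [Num.max ?a ?b] => case: (leP a b) => ?
  | |- context [Num.min ?a ?b] => case: (leP a b) => ? end.

Ltac simp := rewrite ?zeroF; repeat progress (rewrite ?FN ?FD ?FM ?Fmax ?Fmin ?oppy ?oppNy
  ?xFF ?xFy ?xFNy ?xyF ?xNyF ?xyy ?xNyNy ?xyNy ?xNyy
  ?addyF ?addFy ?addyy ?addNyNy ?addFNy ?addNyF ?maxyF ?maxFy ?maxNyF ?maxFNy ?minyF ?minFy ?minNyF ?minFNy ?minyy ?maxyy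
  ?minNyNy ?maxNyNy ?leyF ?leFNy ?leyNy ?leyy ?leNyNy ?lee_fin ?lte_fin ?leey ?leNye).

Ltac fin := repeat match goal with H : is_true _ |- _ => move: H end; simp; try done;
  intros; try (congr EFin); mm; try lra.
Lemma I2 (p q : \bar R) : 0 <= p -> 0 <= q ->
  xadd (Order.max (xadd p (-q)) 0) q = xadd (Order.max (-(xadd p (-q))) 0) p.
Proof. case: p => [p||]; case: q => [q||] => ? ?; fin. Qed.
Lemma I3 a b : xadd a b = xadd (xadd (Order.max a 0) (Order.max b 0)) (- xadd (Order.max (-a) 0) (Order.max (-b) 0)).
Proof. case: a => [a||]; case: b => [b||]; fin. Qed.
Lemma C1 a b : 0 <= b -> b <= a -> xadd b (xadd a (-b)) = a.
Proof. case: a => [a||]; case: b => [b||] => ? ?; fin. Qed.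
Lemma C2 a b z : 0 <= z -> z <= a -> 0 <= b -> b <= a -> xadd z (- Order.min z b) <= xadd a (-b).
Proof. case: a => [a||]; case: b => [b||]; case: z => [z||] => ? ? ? ?; fin. Qed.
Lemma C3 b z : 0 <= z -> 0 <= b -> xadd (Order.min z b) (xadd z (- Order.min z b)) = z.
Proof. case: b => [b||]; case: z => [z||] => ? ?; fin. Qed.
Lemma A2 p x1 x2 : 0 <= p -> 0 <= x1 -> 0 <= x2 -> p <= xadd x1 x2 -> xadd p (- Order.min p x1) <= x2.
Proof. case: p => [p||]; case: x1 => [x1||]; case: x2 => [x2||] => ? ? ? ?; fin. Qed.
Lemma A3 p x1 : 0 <= p -> 0 <= x1 -> 0 <= xadd p (- Order.min p x1).
Proof. case: p => [p||]; case: x1 => [x1||] => ? ?; fin. Qed.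
Lemma A4 p1 p2 x1 x2 : 0 <= p1 -> p1 <= x1 -> 0 <= p2 -> p2 <= x2 -> xadd p1 p2 <= xadd x1 x2.
Proof. case: p1 => [p1||]; case: x1 => [x1||]; case: p2 => [p2||]; case: x2 => [x2||] => ? ? ? ?; fin. Qed.
Lemma xadd0 (a : \bar R) : xadd a 0 = a.
Proof. case: a => [a||]; fin. Qed.
Lemma xadd_ge0 (a b : \bar R) : 0 <= a -> 0 <= b -> 0 <= xadd a b.
Proof. case: a => [a||]; case: b => [b||] => ? ?; fin. Qed.
Lemma max_ge0 (a : \bar R) : 0 <= Order.max a 0.
Proof. case: a => [a||]; fin. Qed.
Lemma min_ge0 (z b : \bar R) : 0 <= z -> 0 <= b -> 0 <= Order.min z b.
Proof. case: z => [z||]; case: b => [b||] => ? ?; fin. Qed.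
Lemma min_le1 (z b : \bar R) : Order.min z b <= z.
Proof. case: z => [z||]; case: b => [b||]; fin. Qed.
Lemma min_le2 (z b : \bar R) : Order.min z b <= b.
Proof. case: z => [z||]; case: b => [b||]; fin. Qed.
Lemma min_mono (z b b' : \bar R) : b' <= b -> Order.min z b' <= Order.min z b.
Proof. case: z => [z||]; case: b => [b||]; case: b' => [b'||] => ?; fin. Qed.
Lemma max_id (a : \bar R) : 0 <= a -> Order.max a 0 = a.
Proof. case: a => [a||] => ?; fin. Qed.
Lemma maxN0 (a : \bar R) : 0 <= a -> Order.max (-a) 0 = 0.
Proof. case: a => [a||] => ?; fin. Qed.
Lemma sub_ge0 (a b : \bar R) : 0 <= b -> b <= a -> 0 <= xadd a (-b).
Proof. case: a => [a||]; case: b => [b||] => ? ?; fin. Qed.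
End PW.

Set Implicit Arguments.
Section Main.
Variables (R : realType) (X : Type) (T0 : set (X -> \bar R)) (S : (X -> \bar R) -> R)
  (M : (X -> \bar R) -> R).
Hypotheses (HT0 : ext_vector_lattice T0) (Hlin : ev_is_linear T0 S)
  (Hcont : ev_seq_continuous T0 S)
  (HMm : forall phi psi, ev_pos_part T0 phi -> ev_pos_part T0 psi -> ev_fle phi psi ->
            (M phi <= M psi)%R)
  (HMb : forall x, T0 x -> (`| S x | <= M (ev_fabs x))%R).

Implicit Types x y z phi psi : X -> \bar R.
Notation fz := (@ev_fzero R X).
Notation pos := (ev_pos_part T0).
Notation P := (ev_Pfun T0 S).
Notation Sp := (ev_Splus T0 S).

Lemma fscale0 x : ev_fscale 0 x = fz.
Proof. by apply: funext => t; rewrite /ev_fscale mul0e. Qed.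
Lemma fadd0 x : ev_fadd x fz = x.
Proof. by apply: funext => t; rewrite /ev_fadd /ev_fzero xadd0. Qed.
Lemma fscale1 x : ev_fscale 1 x = x.
Proof. by apply: funext => t; rewrite /ev_fscale mul1e. Qed.
Lemma fscaleN1 x : ev_fscale (-1) x = ev_fopp x.
Proof. by apply: funext => t; rewrite /ev_fscale /ev_fopp EFinN mulN1e. Qed.

Lemma T_lin x y a b : T0 x -> T0 y -> T0 (ev_fadd (ev_fscale a x) (ev_fscale b y)).
Proof. by case: HT0 => H _ _ _; apply: H. Qed.
Lemma T_scale a x : T0 x -> T0 (ev_fscale a x).
Proof. by move=> Tx; have := @T_lin x x a 0 Tx Tx; rewrite fscale0 fadd0. Qed.
Lemma T_add x y : T0 x -> T0 y -> T0 (ev_fadd x y).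
Proof. by move=> Tx Ty; have := @T_lin x y 1 1 Tx Ty; rewrite !fscale1. Qed.
Lemma T_opp x : T0 x -> T0 (ev_fopp x).
Proof. by move=> Tx; rewrite -fscaleN1; apply: T_scale. Qed.
Lemma T_sub x y : T0 x -> T0 y -> T0 (ev_fsub x y).
Proof. by move=> Tx Ty; apply: T_add => //; apply: T_opp. Qed.
Lemma T_min x y : T0 x -> T0 y -> T0 (ev_fmin x y).
Proof. by case: HT0 => _ H _ _; apply: H. Qed.
Lemma T_max x y : T0 x -> T0 y -> T0 (ev_fmax x y).
Proof. by case: HT0 => _ _ H _; apply: H. Qed.
Lemma T_zero x : T0 x -> T0 fz.
Proof. by move=> Tx; rewrite -(fscale0 x); apply: T_scale. Qed.

Lemma S_scale a x : T0 x -> S (ev_fscale a x) = a * S x.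
Proof. by move=> Tx; have := @Hlin x x a 0 Tx Tx; rewrite fscale0 fadd0 => ->; rewrite mul0r addr0. Qed.
Lemma S_add x y : T0 x -> T0 y -> S (ev_fadd x y) = S x + S y.
Proof. by move=> Tx Ty; have := @Hlin x y 1 1 Tx Ty; rewrite !fscale1 => ->; rewrite !mul1r. Qed.
Lemma S_opp x : T0 x -> S (ev_fopp x) = - S x.
Proof. by move=> Tx; rewrite -fscaleN1 S_scale // mulN1r. Qed.
Lemma S_sub x y : T0 x -> T0 y -> S (ev_fsub x y) = S x - S y.
Proof. by move=> Tx Ty; rewrite /ev_fsub S_add ?S_opp //; apply: T_opp. Qed.
Lemma S_zero x : T0 x -> S fz = 0.
Proof. by move=> Tx; rewrite -(fscale0 x) S_scale // mul0r. Qed.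

Lemma Pset_in x phi : T0 phi -> ev_fle fz phi -> ev_fle phi x -> ev_Pset T0 S x (S phi).
Proof. by move=> Tp p0 px; exists phi. Qed.

Lemma fabs_pos phi : ev_fle fz phi -> ev_fabs phi = phi.
Proof. by move=> p0; apply: funext => t; rewrite /ev_fabs gee0_abs //; apply: p0. Qed.

Lemma fle_refl x : ev_fle x x.
Proof. by move=> t; apply: lexx. Qed.
Lemma fle_trans x y z : ev_fle x y -> ev_fle y z -> ev_fle x z.
Proof. by move=> H1 H2 t; apply: le_trans (H1 t) (H2 t). Qed.

Lemma Pset_ub x : pos x -> ubound (ev_Pset T0 S x) (M x).
Proof.
case=> Tx x0 _ [phi [Tp [p0 px]] <-].
have h1 := ler_norm (S phi); have := @HMb phi Tp; rewrite fabs_pos //.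
have : M phi <= M x by apply: HMm.
lra.
Qed.

Lemma hasP x : pos x -> has_sup (ev_Pset T0 S x).
Proof.
move=> px; split; last by exists (M x); apply: Pset_ub.
exists (S fz); case: px => Tx x0; apply: Pset_in; first [exact: (T_zero Tx) | exact: fle_refl | exact: x0].
Qed.

Lemma P_ge x phi : pos x -> T0 phi -> ev_fle fz phi -> ev_fle phi x -> S phi <= P x.
Proof. by move=> px Tp p0 ppx; apply: sup_upper_bound (hasP px) _ (Pset_in Tp p0 ppx). Qed.

Lemma P_le x c : pos x ->
  (forall phi, T0 phi -> ev_fle fz phi -> ev_fle phi x -> S phi <= c) -> P x <= c.
Proof.
move=> px H; apply: ge_sup; first by case: (hasP px).
by move=> _ [phi [Tp [p0 ppx]] <-]; apply: H.
Qed.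

Lemma P_ge0 x : pos x -> 0 <= P x.
Proof.
move=> px; case: (px) => Tx x0; rewrite -(S_zero Tx).
by apply: P_ge => //; first [exact: (T_zero Tx) | exact: fle_refl].
Qed.

Lemma P0 x : T0 x -> P fz = 0.
Proof.
move=> Tx; have pz : pos fz by split; first [exact: (T_zero Tx) | exact: fle_refl].
apply/le_anti/andP; split; last exact: P_ge0.
apply: P_le => // phi Tp p0 pz'.
have -> : phi = fz by apply: funext => t; apply/le_anti/andP; split; [apply: pz'|apply: p0].
by rewrite (S_zero Tx).
Qed.

Lemma P_mono x y : pos x -> pos y -> ev_fle x y -> P x <= P y.
Proof.
move=> px py xy; apply: P_le => // phi Tp p0 ppx.
by apply: P_ge => //; apply: fle_trans ppx xy.
Qed.

Lemma pos_add x y : pos x -> pos y -> pos (ev_fadd x y).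
Proof.
case=> Tx x0 [Ty y0]; split; first exact: T_add.
by move=> t; apply: xadd_ge0; [exact: x0|exact: y0].
Qed.

Lemma P_add x1 x2 : pos x1 -> pos x2 -> P (ev_fadd x1 x2) = P x1 + P x2.
Proof.
move=> p1 p2; have p12 := pos_add p1 p2.
case: (p1) => T1 x10; case: (p2) => T2 x20.
apply/le_anti/andP; split.
  apply: P_le => // phi Tp p0 ppx.
  have Tm : T0 (ev_fmin phi x1) by apply: T_min.
  have Td : T0 (ev_fsub phi (ev_fmin phi x1)) by apply: T_sub.
  have -> : phi = ev_fadd (ev_fmin phi x1) (ev_fsub phi (ev_fmin phi x1)).
    apply: funext => t; rewrite /ev_fadd /ev_fsub /ev_fadd /ev_fopp /ev_fmin C3 //.
      exact: p0.
    exact: x10.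
  rewrite S_add //; apply: lerD.
    apply: P_ge => // t; rewrite /ev_fmin; [apply: min_ge0; [exact: p0|exact: x10]|apply: min_le2].
  apply: P_ge => // t; rewrite /ev_fsub /ev_fadd /ev_fopp /ev_fmin.
    by apply: A3; [exact: p0|exact: x10].
  by apply: A2; [exact: p0|exact: x10|exact: x20|exact: ppx].
suff : P x1 <= P (ev_fadd x1 x2) - P x2 by lra.
apply: P_le => // phi1 Tp1 p10 p1x.
suff : P x2 <= P (ev_fadd x1 x2) - S phi1 by lra.
apply: P_le => // phi2 Tp2 p20 p2x.
suff : S phi1 + S phi2 <= P (ev_fadd x1 x2) by lra.
rewrite -S_add //; apply: P_ge => //; first exact: T_add.
  by move=> t; apply: xadd_ge0; [exact: p10|exact: p20].
by move=> t; apply: A4; [exact: p10|exact: p1x|exact: p20|exact: p2x].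
Qed.

Lemma P_scale x c : pos x -> 0 <= c -> P (ev_fscale c x) = c * P x.
Proof.
move=> px; rewrite le_eqVlt => /predU1P[<-|c0].
  by case: px => Tx _; rewrite fscale0 mul0r (P0 Tx).
case: (px) => Tx x0.
have pcx : pos (ev_fscale c x).
  by split; [exact: T_scale|move=> t; apply: mule_ge0; [rewrite lee_fin ltW|exact: x0]].
have scK phi : ev_fscale c (ev_fscale c^-1 phi) = phi.
  apply: funext => t; rewrite /ev_fscale muleA -EFinM mulfV ?mul1e //.
  by rewrite gt_eqF.
have scK' phi : ev_fscale c^-1 (ev_fscale c phi) = phi.
  apply: funext => t; rewrite /ev_fscale muleA -EFinM mulVf ?mul1e //.
  by rewrite gt_eqF.
apply/le_anti/andP; split.
  apply: P_le => // phi Tp p0 ppx.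
  rewrite -(scK phi) S_scale; last exact: T_scale.
  apply: ler_wpM2l; first exact: ltW.
  apply: P_ge => //; first exact: T_scale.
    by move=> t; apply: mule_ge0; [rewrite lee_fin invr_ge0 ltW|exact: p0].
  move=> t; have E := congr1 (fun f => f t) (scK' x); rewrite /ev_fscale /= in E.
  rewrite -E /ev_fscale.
  by apply: lee_wpmul2l; [rewrite lee_fin invr_ge0 ltW|apply: ppx].
suff : P x <= c^-1 * P (ev_fscale c x).
  move=> H; have := ler_wpM2l (ltW c0) H.
  by rewrite mulrA mulfV ?mul1r // gt_eqF.
apply: P_le => // psi Tp p0 ppx.
have -> : S psi = c^-1 * (c * S psi) by rewrite mulrA mulVf ?mul1r // gt_eqF.
apply: ler_wpM2l; first by rewrite invr_ge0 ltW.
rewrite -S_scale //; apply: P_ge => //; first exact: T_scale.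
  by move=> t; apply: mule_ge0; [rewrite lee_fin ltW|exact: p0].
by move=> t; apply: lee_wpmul2l; [rewrite lee_fin ltW|apply: ppx].
Qed.

Lemma pos_pp x : T0 x -> pos (ev_fmax x fz).
Proof. by move=> Tx; split; [apply: T_max => //; exact: T_zero Tx|move=> t; apply: max_ge0]. Qed.
Lemma pos_np x : T0 x -> pos (ev_fmax (ev_fopp x) fz).
Proof. by move=> Tx; apply: pos_pp; apply: T_opp. Qed.

Lemma Splus_dec x phi psi : pos phi -> pos psi -> x = ev_fsub phi psi -> Sp x = P phi - P psi.
Proof.
move=> pphi ppsi ex.
have Tx : T0 x by rewrite ex; apply: T_sub; [case: pphi|case: ppsi].
have E : ev_fadd (ev_fmax x fz) psi = ev_fadd (ev_fmax (ev_fopp x) fz) phi.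
  apply: funext => t; rewrite ex /ev_fadd /ev_fmax /ev_fsub /ev_fopp /ev_fadd /ev_fzero.
  by apply: I2; [case: pphi => _; apply|case: ppsi => _; apply].
have := congr1 P E; rewrite !P_add //; try exact: pos_pp; try exact: pos_np.
by rewrite /ev_Splus => H; lra.
Qed.

Lemma Splus_add x y : T0 x -> T0 y -> Sp (ev_fadd x y) = Sp x + Sp y.
Proof.
move=> Tx Ty.
rewrite (@Splus_dec _ (ev_fadd (ev_fmax x fz) (ev_fmax y fz))
   (ev_fadd (ev_fmax (ev_fopp x) fz) (ev_fmax (ev_fopp y) fz))).
- by rewrite !P_add; try exact: pos_pp; try exact: pos_np; rewrite /ev_Splus; lra.
- by apply: pos_add; apply: pos_pp.
- by apply: pos_add; apply: pos_np.
apply: funext => t; rewrite /ev_fsub /ev_fadd /ev_fopp /ev_fmax /ev_fzero.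
exact: I3.
Qed.

Lemma Splus_scale c x : T0 x -> Sp (ev_fscale c x) = c * Sp x.
Proof.
move=> Tx; case: (leP 0 c) => c0.
  have E1 : ev_fmax (ev_fscale c x) fz = ev_fscale c (ev_fmax x fz).
    by apply: funext => t; rewrite /ev_fmax /ev_fscale /ev_fzero maxe_pMr ?mule0.
  have E2 : ev_fmax (ev_fopp (ev_fscale c x)) fz = ev_fscale c (ev_fmax (ev_fopp x) fz).
    by apply: funext => t; rewrite /ev_fmax /ev_fscale /ev_fopp /ev_fzero maxe_pMr ?mule0 ?muleN.
  rewrite /ev_Splus E1 E2 !P_scale //; try exact: pos_pp; try exact: pos_np.
  by rewrite mulrBr.
have c0' : 0 <= - c by rewrite oppr_ge0 ltW.
have E1 : ev_fmax (ev_fscale c x) fz = ev_fscale (- c) (ev_fmax (ev_fopp x) fz).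
  by apply: funext => t; rewrite /ev_fmax /ev_fscale /ev_fopp /ev_fzero maxe_pMr ?mule0 ?EFinN ?muleNN.
have E2 : ev_fmax (ev_fopp (ev_fscale c x)) fz = ev_fscale (- c) (ev_fmax x fz).
  by apply: funext => t; rewrite /ev_fmax /ev_fscale /ev_fopp /ev_fzero maxe_pMr ?mule0 ?EFinN ?mulNe.
rewrite /ev_Splus E1 E2 !P_scale //; try exact: pos_pp; try exact: pos_np.
by rewrite mulrBr; lra.
Qed.

Lemma Splus_lin : ev_is_linear T0 Sp.
Proof.
move=> x y a b Tx Ty; rewrite Splus_add; try exact: T_scale.
by rewrite !Splus_scale.
Qed.

Lemma Splus_pos x : pos x -> Sp x = P x.
Proof.
move=> px; case: (px) => Tx x0.
have E1 : ev_fmax x fz = x by apply: funext => t; rewrite /ev_fmax /ev_fzero max_id //; apply: x0.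
have E2 : ev_fmax (ev_fopp x) fz = fz.
  by apply: funext => t; rewrite /ev_fmax /ev_fopp /ev_fzero maxN0 //; apply: x0.
by rewrite /ev_Splus E1 E2 (P0 Tx) subr0.
Qed.

Lemma decr_le (xs : nat -> X -> \bar R) : ev_decr_to0 xs ->
  forall m n t, (m <= n)%N -> (xs n t <= xs m t)%E.
Proof.
move=> [Hd _] m n t mn.
have Hm : forall k, (xs (m + k)%N t <= xs m t)%E.
  elim=> [|k IH]; first by rewrite addn0.
  by rewrite addnS; apply: le_trans (Hd _ _) IH.
by rewrite -(subnKC mn); apply: Hm.
Qed.

Lemma decr_ge0 (xs : nat -> X -> \bar R) : ev_decr_to0 xs -> forall n t, (0 <= xs n t)%E.
Proof.
move=> dxs n t; case: (dxs) => _ Hl.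
apply: (cvge_to_le (Hl t)); exists n => // m /= nm.
exact: decr_le.
Qed.

Lemma Splus_cont : ev_seq_continuous T0 Sp.
Proof.
move=> xs Txs dxs.
have xs0 := decr_ge0 dxs.
have pxs n : pos (xs n) by split => // t; exact: xs0.
have -> : (fun n => Sp (xs n)) = (fun n => P (xs n)).
  by apply: funext => n; rewrite Splus_pos.
apply/cvgrPdist_le => e e0.
have e20 : 0 < e / 2 by rewrite divr_gt0.
have [_ [z [Tz [z0 zx]] <-] Hz] := sup_adherent e20 (hasP (pxs 0%N)).
have {}Hz : P (xs 0%N) - e / 2 < S z by exact: Hz.
pose w := fun n => ev_fmin z (xs n).
have Tw n : T0 (w n) by apply: T_min.
have dw : ev_decr_to0 w.
  split.
    move=> n t; rewrite /w /ev_fmin; apply: min_mono; case: dxs => Hd _; apply: Hd.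
  move=> t.
  apply: (@squeeze_cvge _ _ _ _ (fun _ => 0%E) _ (fun n => xs n t)).
  - apply: nearW => n; rewrite /w /ev_fmin min_le2 andbT.
    by apply: min_ge0; [exact: z0|exact: xs0].
  - exact: cvg_cst.
  - by case: dxs.
have := @Hcont w Tw dw => /cvgrPdist_le /(_ _ e20).
apply: filterS => n Hn.
rewrite sub0r normrN ger0_norm ?P_ge0 //.
pose y := ev_fsub (xs 0%N) (xs n).
have py : pos y.
  split; first by apply: T_sub.
  by move=> t; apply: sub_ge0; try exact: xs0; try exact: decr_le.
have HP : P (xs 0%N) = P (xs n) + P y.
  rewrite -P_add //; congr P; apply: funext => t.
  rewrite /y /ev_fsub /ev_fadd /ev_fopp C1 //; try exact: xs0; try exact: decr_le.
have Hy : S z - S (w n) <= P y.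
  rewrite -S_sub //; apply: P_ge => //; first exact: T_sub.
    move=> t; rewrite /w /ev_fsub /ev_fadd /ev_fopp /ev_fmin.
    by apply: A3; try exact: z0; try exact: xs0.
  move=> t; rewrite /w /y /ev_fsub /ev_fadd /ev_fopp /ev_fmin.
  apply: C2; try exact: z0; try exact: zx; try exact: xs0; try exact: decr_le.
rewrite sub0r normrN in Hn.
have := ler_norm (S (w n)).
lra.
Qed.

Lemma main_sec : [/\ (forall x, ev_pos_part T0 x -> has_sup (ev_Pset T0 S x)),
      (forall x1 x2, ev_pos_part T0 x1 -> ev_pos_part T0 x2 ->
         ev_Pfun T0 S (ev_fadd x1 x2) = ev_Pfun T0 S x1 + ev_Pfun T0 S x2),
      (forall x phi psi, ev_pos_part T0 phi -> ev_pos_part T0 psi -> x = ev_fsub phi psi ->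
         ev_Splus T0 S x = ev_Pfun T0 S phi - ev_Pfun T0 S psi),
      [/\ I_integral T0 (ev_Splus T0 S), I_integral T0 (ev_Sminus T0 S) &
          I_integral T0 (ev_Sabs T0 S)] &
      (forall x, T0 x -> S x = ev_Splus T0 S x - ev_Sminus T0 S x)].
Proof.
have pp : forall x, T0 x -> ev_fle fz x -> pos x by move=> x Tx x0; split.
have Spos : forall x, T0 x -> ev_fle fz x -> 0 <= Sp x.
  by move=> x Tx x0; rewrite Splus_pos; [apply: P_ge0; apply: pp|apply: pp].
have Smpos : forall x, T0 x -> ev_fle fz x -> 0 <= ev_Sminus T0 S x.
  move=> x Tx x0; rewrite /ev_Sminus Splus_pos; last exact: pp.
  by rewrite subr_ge0; apply: P_ge; try exact: pp; try exact: fle_refl.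
split.
- exact: hasP.
- exact: P_add.
- exact: Splus_dec.
- split.
  + by split; [exact: Splus_lin|exact: Spos|exact: Splus_cont].
  + split.
    * move=> x y a b Tx Ty.
      have h1 : Sp (ev_fadd (ev_fscale a x) (ev_fscale b y)) = a * Sp x + b * Sp y by apply: Splus_lin.
      have h2 : S (ev_fadd (ev_fscale a x) (ev_fscale b y)) = a * S x + b * S y by apply: Hlin.
      rewrite /ev_Sminus h1 h2; ring.
    * exact: Smpos.
    * move=> xs Txs dxs; have := cvgB (Splus_cont Txs dxs) (@Hcont xs Txs dxs).
      by move=> H; have {}H := H _; rewrite subr0 in H; exact: H.
  + split.
    * move=> x y a b Tx Ty.
      have h1 : Sp (ev_fadd (ev_fscale a x) (ev_fscale b y)) = a * Sp x + b * Sp y by apply: Splus_lin.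
      have h2 : S (ev_fadd (ev_fscale a x) (ev_fscale b y)) = a * S x + b * S y by apply: Hlin.
      rewrite /ev_Sabs /ev_Sminus h1 h2; ring.
    * by move=> x Tx x0; apply: addr_ge0; [apply: Spos|apply: Smpos].
    * move=> xs Txs dxs.
      have H1 := Splus_cont Txs dxs.
      have := cvgD H1 (cvgB H1 (@Hcont xs Txs dxs)).
      by move=> H; have {}H := H _; rewrite subr0 addr0 in H; exact: H.
- by move=> x Tx; rewrite /ev_Sminus; lra.
Qed.

End Main.

Unset Implicit Arguments.

Theorem mainTheorem17 (R : realType) (X : Type) (HX : inhabited X)
  (T0 : set (X -> \bar R)) (S : (X -> \bar R) -> R)
  (HT0 : ext_vector_lattice T0) (HS : S_integral T0 S) :
  [/\ (forall x, ev_pos_part T0 x -> has_sup (ev_Pset T0 S x)),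
      (forall x1 x2, ev_pos_part T0 x1 -> ev_pos_part T0 x2 ->
         ev_Pfun T0 S (ev_fadd x1 x2) = ev_Pfun T0 S x1 + ev_Pfun T0 S x2),
      (forall x phi psi, ev_pos_part T0 phi -> ev_pos_part T0 psi -> x = ev_fsub phi psi ->
         ev_Splus T0 S x = ev_Pfun T0 S phi - ev_Pfun T0 S psi),
      [/\ I_integral T0 (ev_Splus T0 S), I_integral T0 (ev_Sminus T0 S) &
          I_integral T0 (ev_Sabs T0 S)] &
      (forall x, T0 x -> S x = ev_Splus T0 S x - ev_Sminus T0 S x)].
Proof.
case: HS => Hlin Hcont [M [HMm HMb]].
eapply (@main_sec R X T0 S M); eassumption.
Qed.
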